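(* Consider the dynamical system $X(t+1)=\operatorname{diag}(|X(t)|\mathbf{1}_n)^{-1}X(t)X(t)^{\top}$ on the domain $\mathcal{S}_{\mathrm{nz\text{-}row}}$, i.e., the map $f_{\mathrm{HbM}}(X)=\operatorname{diag}(|X|\mathbf{1}_n)^{-1}XX^{\top}$. Define $Q_{\mathrm{HbM}}$ as the set of matrices $PYP^{\top}\in\mathcal{S}_{\mathrm{nz\text{-}row}}$ where $P$ is an $n\times n$ permutation matrix and $Y$ is a block diagonal matrix each of whose diagonal blocks has the form $\alpha bb^{\top}$ with $\alpha>0$ and $b\in\{-1,+1\}^m$, $m\le n$ (different blocks may have different $\alpha$, $b$, $m$, with block sizes summing to $n$). Then: (i) $Q_{\mathrm{HbM}}$ is the set of all fixed points of $f_{\mathrm{HbM}}$ in $\mathcal{S}_{\mathrm{nz\text{-}row}}$; (ii) for every $X\in Q_{\mathrm{HbM}}$, $G(X)$ is composed of isolated complete subgraphs that satisfy social balance, i.e., there is a partition of $\{1,\dots,n\}$ into sets $V_1,\dots,V_K$ such that $X_{ij}=0$ whenever $i,j$ lie in different sets, and for each $k$ the principal submatrix of $X$ indexed by $V_k$ has all entries non-zero and its graph satisfies social balance.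
   Context: $\mathcal{S}_{\mathrm{nz\text{-}row}}=\{X\in\mathbb{R}^{n\times n}: \text{every row of }X\text{ is non-zero}\}$. $|X|$ is the entry-wise absolute value and $\mathbf{1}_n$ the all-ones vector. $G(X)$ is the weighted digraph with (possibly negative) adjacency matrix $X$. For a square matrix $Z$, $G(Z)$ satisfies social balance if (S1) $Z_{ii}>0$ for all $i$ and (S2) $\operatorname{sign}(Z_{ij})\operatorname{sign}(Z_{jk})\operatorname{sign}(Z_{ki})=1$ for all indices $i,j,k$, where $\operatorname{sign}$ is the sign function. *)

(* Defs.v *)
From mathcomp Require Import all_boot all_order all_fingroup all_algebra.
From mathcomp Require Import all_reals.
Set Implicit Arguments. Unset Strict Implicit. Unset Printing Implicit Defensive.
Import Order.TTheory GRing.Theory Num.Theory.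
Local Open Scope ring_scope.

Definition in_S_nzrow (R : realType) (n : nat) (X : 'M[R]_n) : Prop :=
  forall i : 'I_n, row i X != 0.

Definition absmx (R : realType) (n : nat) (X : 'M[R]_n) : 'M[R]_n :=
  map_mx (fun x => `|x|) X.

Definition ones (R : realType) (n : nat) : 'cV[R]_n := const_mx 1.

Definition f_HbM (R : realType) (n : nat) (X : 'M[R]_n) : 'M[R]_n :=
  invmx (diag_mx (absmx X *m ones R n)^T) *m X *m X^T.

Definition pm1_vec (R : realType) (m : nat) (b : 'cV[R]_m) : Prop :=
  forall j : 'I_m, b j 0 = 1 \/ b j 0 = -1.

Definition Q_HbM (R : realType) (n : nat) (X : 'M[R]_n) : Prop :=
  in_S_nzrow X /\
  exists (s : 'S_n) (K : nat) (m : 'I_K -> nat)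
         (E : (\sum_(k < K) m k)%N = n)
         (alpha : 'I_K -> R) (b : forall k : 'I_K, 'cV[R]_(m k)),
    (forall k, 0 < alpha k) /\ (forall k, pm1_vec (b k)) /\
    X = perm_mx s *m
          castmx (E, E) (\mxdiag_(k < K) (alpha k *: (b k *m (b k)^T)))
        *m (perm_mx s)^T.

Definition social_balance (R : realType) (m : nat) (Z : 'M[R]_m) : Prop :=
  (forall i, 0 < Z i i) /\
  (forall i j k, Num.sg (Z i j) * Num.sg (Z j k) * Num.sg (Z k i) = 1).

Definition principal_submx (R : realType) (n : nat) (X : 'M[R]_n)
  (B : {set 'I_n}) : 'M[R]_#|B| :=
  \matrix_(i < #|B|, j < #|B|) X (enum_val i) (enum_val j).

Definition isolated_balanced_cliques (R : realType) (n : nat) (X : 'M[R]_n)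
  : Prop :=
  exists P : {set {set 'I_n}},
    partition P [set: 'I_n] /\
    (forall i j : 'I_n, pblock P i != pblock P j -> X i j = 0) /\
    (forall B, B \in P ->
       (forall i j, principal_submx X B i j != 0) /\
       social_balance (principal_submx X B)).

(* Main.v *)
Require Import Defs.
From mathcomp Require Import all_boot all_order all_fingroup all_algebra.
From mathcomp Require Import all_reals.
From mathcomp Require Import ring lra.
Import Order.TTheory GRing.Theory Num.Theory.
Set Implicit Arguments. Unset Strict Implicit. Unset Printing Implicit Defensive.
Local Open Scope ring_scope.

Definition Char (R : realType) n (X : 'M[R]_n) := exists K (g : 'I_n -> 'I_K)
  (sg : 'I_n -> R) (al : 'I_K -> R), (forall i, sg i = 1 \/ sg i = -1) /\
  (forall k, 0 < al k) /\
  (forall i j, X i j = if g i == g j then al (g i) * sg i * sg j else 0).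

Definition Dm (R : realType) n (X : 'M[R]_n) := diag_mx (absmx X *m ones R n)^T.

Lemma Dm_entry (R : realType) n (X : 'M[R]_n) i : (absmx X *m ones R n)^T 0 i = \sum_j `|X i j|.
Proof. by rewrite !mxE; apply: eq_bigr => j _; rewrite !mxE mulr1. Qed.

Lemma Dm_unit (R : realType) n (X : 'M[R]_n) : (forall i, 0 < \sum_j `|X i j|) -> Dm X \in unitmx.
Proof.
move=> H; rewrite unitmxE det_diag unitfE; apply/prodf_neq0 => i _.
by rewrite Dm_entry gt_eqF.
Qed.

Lemma fix_iff (R : realType) n (X : 'M[R]_n) : (forall i, 0 < \sum_j `|X i j|) ->
  (f_HbM X = X <-> X *m X^T = Dm X *m X).
Proof.
move=> H; have U := Dm_unit H; rewrite /f_HbM -/(Dm X) -mulmxA; split.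
  move=> E; have := congr1 (mulmx (Dm X)) E; rewrite mulKVmx //.
by move=> ->; rewrite mulKmx.
Qed.


Lemma Char_fix (R : realType) n (X : 'M[R]_n) : Char X ->
  (forall i, 0 < \sum_j `|X i j|) /\ f_HbM X = X.
Proof.
case=> K [g [sg [al [Hs [Ha HX]]]]].
have Hs2 : forall i, sg i * sg i = 1.
  by move=> i; case: (Hs i) => ->; rewrite ?mulr1 ?mulrN1 ?opprK.
have Habs : forall i, `|sg i| = 1.
  by move=> i; case: (Hs i) => ->; rewrite ?normrN normr1.
have Hd : forall i, \sum_j `|X i j| = al (g i) *+ #|[pred l | g i == g l]|.
  move=> i; rewrite -sumr_const [RHS]big_mkcond /=; apply: eq_bigr => l _.
  rewrite HX inE /=; case: ifP => _; last by rewrite normr0.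
  by rewrite !normrM !Habs !mulr1 gtr0_norm.
have Hpos : forall i, 0 < \sum_j `|X i j|.
  move=> i; rewrite Hd pmulrn_lgt0 ?Ha //; apply/card_gt0P; exists i; by rewrite inE /=.
split => //; apply/(fix_iff Hpos); apply/matrixP => i j.
rewrite /Dm mul_diag_mx [in RHS]mxE Dm_entry Hd mxE.
have -> : \sum_l X i l * X^T l j = \sum_(l | g i == g l) (if g i == g j then al (g i) ^+ 2 * sg i * sg j else 0).
  rewrite [RHS]big_mkcond /=; apply: eq_bigr => l _; rewrite mxE !HX.
  case: (eqVneq (g i) (g l)) => [e|ne]; last by rewrite !mul0r.
  case: (eqVneq (g j) (g l)) => [e'|ne']; last first.
    rewrite e eq_sym (negbTE ne') ?mulr0 //. 
  rewrite e e' eqxx; have := Hs2 l; set a := al _; set s := sg l => H1.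
  by rewrite -[RHS]mulr1 -H1; ring.
rewrite sumr_const HX; case: ifP => _; last by rewrite mulr0 mul0rn.
rewrite [RHS]mulrnAl; congr (_ *+ _); first by ring.
Qed.

Lemma mxdiag_rank1 (R : realType) K (m : 'I_K -> nat) (F : forall k, 'M[R]_(m k))
  (G : forall k, 'I_(m k) -> R) (al : 'I_K -> R) :
  (forall k x y, F k x y = al k * G k x * G k y) ->
  forall p q, (\mxdiag_k F k) p q =
    if tagnat.sig1 p == tagnat.sig1 q then
      al (tagnat.sig1 p) * G _ (tagnat.sig2 p) * G _ (tagnat.sig2 q) else 0.
Proof.
move=> HF p q; rewrite /mxdiag mxE.
move: (tagnat.sig2 p) (tagnat.sig2 q); move: (tagnat.sig1 p) (tagnat.sig1 q) => a c.
case: (eqVneq a c) => [<-|ne] x y; first by rewrite conform_mx_id HF.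
by rewrite mxE.
Qed.

Lemma perm_conj_entry (R : realType) n (s : 'S_n) (Y : 'M[R]_n) i j :
  (perm_mx s *m Y *m (perm_mx s)^T) i j = Y (s i) (s j).
Proof. by rewrite tr_perm_mx -col_permE -row_permE !mxE. Qed.

Lemma Q_Char (R : realType) n (X : 'M[R]_n) : Q_HbM X -> Char X.
Proof.
case=> _ [s [K [m [E [alpha [b [Ha [Hb HX]]]]]]]].
pose p i := cast_ord (esym E) (s i).
exists K, (fun i => tagnat.sig1 (p i)),
  (fun i => b (tagnat.sig1 (p i)) (tagnat.sig2 (p i)) 0), alpha.
split; first by move=> i; apply: Hb.
split => // i j.
rewrite HX perm_conj_entry castmxE /=.
rewrite (@mxdiag_rank1 R K m _ (fun k x => b k x 0) alpha) //.
by move=> k x y; rewrite !mxE big_ord1 !mxE mulrA.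
Qed.

Lemma sum_card_classes n K (g : 'I_n -> 'I_K) :
  (\sum_(k < K) #|[set l | g l == k]|)%N = n.
Proof.
have -> : (\sum_(k < K) #|[set l | g l == k]| = \sum_(k < K) \sum_(l < n) (g l == k))%N.
  by apply: eq_bigr => k _; rewrite -sum1_card big_mkcond /=; apply: eq_bigr => l _; rewrite inE; case: eqP.
rewrite exchange_big /= -[RHS]card_ord -sum1_card; apply: eq_bigr => l _.
by rewrite (bigD1 (g l)) //= eqxx big1 // => k; rewrite eq_sym => /negbTE ->.
Qed.

Lemma Char_Q (R : realType) n (X : 'M[R]_n) : in_S_nzrow X -> Char X -> Q_HbM X.
Proof.
move=> Hnz [K [g [sg [al [Hs [Ha HX]]]]]].
split => //.
pose C k := [set l | g l == k].
pose m k := #|C k|.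
have E : (\sum_(k < K) m k)%N = n := sum_card_classes g.
have Hi : forall i, i \in C (g i) by move=> i; rewrite inE.
pose h i : 'I_(\sum_(k < K) m k) := @tagnat.Rank K m (g i) (enum_rank_in (Hi i) i).
have L1 : forall i, tagnat.sig1 (h i) = g i.
  by move=> i; rewrite /tagnat.sig1 /h /tagnat.Rank tagnat.rankK.
have L2 : forall i, enum_val (tagnat.sig2 (h i)) = i.
  move=> i; rewrite /tagnat.sig2 /tagnat.sig1 /h /tagnat.Rank tagnat.rankK /=.
  by rewrite enum_rankK_in.
have tinj : injective (fun i => cast_ord E (h i)).
  move=> i j /(congr1 (cast_ord (esym E))); rewrite !cast_ordK => e.
  by rewrite -(L2 i) -(L2 j) e.
exists (perm tinj), K, m, E, al, (fun k => \col_(x < m k) sg (enum_val x)).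
split => //; split.
  by move=> k x; rewrite mxE; apply: Hs.
apply/matrixP => i j; rewrite perm_conj_entry castmxE /= !permE /= !cast_ordK.
rewrite (@mxdiag_rank1 R K m _ (fun k x => sg (enum_val x)) al); last first.
  by move=> k x y; rewrite !mxE big_ord1 !mxE mulrA.
by rewrite !L2 !L1 HX.
Qed.

Lemma sg_pm (R : realType) (x : R) : x != 0 -> Num.sg x = 1 \/ Num.sg x = -1.
Proof.
move=> nz; case: (ltrgtP x 0) => h; [right; exact: ltr0_sg | left; exact: gtr0_sg|].
by rewrite h eqxx in nz.
Qed.

Lemma fix_Char (R : realType) n (X : 'M[R]_n) : in_S_nzrow X -> f_HbM X = X -> Char X.
Proof.
move=> Hnz Hf.
pose d i := \sum_j `|X i j|.
have Hnz' : forall i, exists j, X i j != 0.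
  move=> i; apply/existsP; apply: contraT; rewrite negb_exists => /forallP H.
  move: (Hnz i); case/negP; apply/eqP/matrixP => a b; rewrite !mxE.
  by apply/eqP; move: (H b); rewrite negbK.
have Hd : forall i, 0 < d i.
  move=> i; case: (Hnz' i) => j Hj; rewrite /d (bigD1 j) //=.
  by rewrite ltr_pwDl ?normr_gt0 // sumr_ge0.
pose Z i j := \sum_l X i l * X j l.
have HZ : forall i j, Z i j = d i * X i j.
  move=> i j; have EE := proj1 (fix_iff Hd) Hf; have := congr1 (fun M : 'M[R]_n => M i j) EE.
  rewrite /Dm mul_diag_mx [in X in _ = X -> _]mxE Dm_entry mxE => <-.
  by apply: eq_bigr => l _; rewrite mxE.
have Zsym : forall i j, Z i j = Z j i.
  by move=> i j; apply: eq_bigr => l _; rewrite mulrC.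
have Zii : forall i, Z i i = \sum_l X i l ^+ 2.
  by move=> i; apply: eq_bigr => l _; rewrite expr2.
have Zpos : forall i, 0 < Z i i.
  move=> i; case: (Hnz' i) => j Hj; rewrite Zii (bigD1 j) //=.
  by rewrite ltr_pwDl ?sumr_ge0 // => *; rewrite ?sqr_ge0 // lt_def sqrf_eq0 Hj sqr_ge0.
have Hkey : forall i, \sum_j Z i i * `|Z i j| = \sum_j Z i j ^+ 2.
  move=> i.
  have e1 : \sum_j Z i j ^+ 2 = d i ^+ 2 * Z i i.
    rewrite Zii mulr_sumr; apply: eq_bigr => j _; rewrite HZ; ring.
  have e2 : \sum_j `|Z i j| = d i ^+ 2.
    rewrite expr2 {2}/d mulr_sumr; apply: eq_bigr => j _.
    by rewrite HZ normrM ger0_norm // ltW.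
  by rewrite e1 -mulr_sumr e2 mulrC.
have Hdiff : forall s i j, s * s = 1 ->
    \sum_l (X i l - s * X j l) ^+ 2 = Z i i + Z j j - 2 * s * Z i j.
  move=> s i j Hs; rewrite !Zii /Z mulr_sumr -sumrN -!big_split /=.
  apply: eq_bigr => l _; transitivity (X i l ^+ 2 + (s * s) * X j l ^+ 2 - 2 * s * (X i l * X j l)); first by ring. by rewrite Hs mul1r.
have Tge0 : forall i j, 0 <= `|Z i j| * (Z i i + Z j j) - 2 * Z i j ^+ 2.
  move=> i j; have Hs : Num.sg (Z i j) * Num.sg (Z i j) = 1 \/ Z i j = 0.
    case: (eqVneq (Z i j) 0) => [->|nz]; [by right|left].
    by case: (sg_pm nz) => ->; rewrite ?mulr1 ?mulrN1 ?opprK.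
  case: Hs => [Hs|->]; last by rewrite normr0 expr0n /= !mul0r mulr0 subr0.
  have := Hdiff _ i j Hs; rewrite -mulrA -normrEsg => Hq.
  have : 0 <= Z i i + Z j j - 2 * `|Z i j| by rewrite -Hq sumr_ge0 // => *; exact: sqr_ge0.
  move=> H; rewrite -[Z i j ^+ 2]ger0_norm ?sqr_ge0 // normrX.
  have -> : `|Z i j| * (Z i i + Z j j) - 2 * `|Z i j| ^+ 2 =
            `|Z i j| * (Z i i + Z j j - 2 * `|Z i j|) by ring.
  by rewrite mulr_ge0.
have Tsum : \sum_i \sum_j (`|Z i j| * (Z i i + Z j j) - 2 * Z i j ^+ 2) = 0.
  have S2 : \sum_i \sum_j `|Z i j| * Z j j = \sum_i \sum_j Z i i * `|Z i j|.
    rewrite exchange_big /=; apply: eq_bigr => i _; apply: eq_bigr => j _.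
    by rewrite Zsym mulrC.
  under eq_bigr do rewrite big_split /= sumrN -mulr_sumr.
  rewrite big_split /= sumrN -mulr_sumr.
  under eq_bigr do (under eq_bigr do rewrite mulrDr).
  under eq_bigr do rewrite big_split /=.
  rewrite big_split /= S2.
  under eq_bigr do (under eq_bigr do rewrite mulrC).
  rewrite -big_split /=.
  under eq_bigr do rewrite -big_split /=.
  have -> : \sum_i \sum_j (Z i i * `|Z i j| + Z i i * `|Z i j|) = 2 * \sum_i \sum_j Z i j ^+ 2.
    rewrite mulr_sumr; apply: eq_bigr => i _; rewrite big_split /= Hkey; ring.
  by rewrite subrr.
have T0 : forall i j, `|Z i j| * (Z i i + Z j j) - 2 * Z i j ^+ 2 = 0.
  move=> i j.
  have H1 := psumr_eq0P _ Tsum.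
  have Hi : \sum_j (`|Z i j| * (Z i i + Z j j) - 2 * Z i j ^+ 2) = 0.
    apply: H1 => // k _; apply: sumr_ge0 => l _; exact: Tge0.
  have H2 := psumr_eq0P _ Hi.
  apply: H2 => // k _; exact: Tge0.
have HA : forall i j, Z i j != 0 -> forall l, X i l = Num.sg (Z i j) * X j l.
  move=> i j nz l.
  have Hs : Num.sg (Z i j) * Num.sg (Z i j) = 1.
    by case: (sg_pm nz) => ->; rewrite ?mulr1 ?mulrN1 ?opprK.
  have H0 : Z i i + Z j j - 2 * `|Z i j| = 0.
    have := T0 i j; rewrite -[Z i j ^+ 2]ger0_norm ?sqr_ge0 // normrX.
    have -> : `|Z i j| * (Z i i + Z j j) - 2 * `|Z i j| ^+ 2 =
            `|Z i j| * (Z i i + Z j j - 2 * `|Z i j|) by ring.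
    by move/eqP; rewrite mulf_eq0 normr_eq0 (negbTE nz) /= => /eqP.
  have := Hdiff _ i j Hs; rewrite -mulrA -normrEsg H0 => Hq.
  have H3 := psumr_eq0P _ Hq.
  have : (X i l - Num.sg (Z i j) * X j l) ^+ 2 = 0 by apply: H3 => // k _; exact: sqr_ge0.
  by move/eqP; rewrite sqrf_eq0 subr_eq0 => /eqP.
have HC : forall i j s, (forall l, X i l = s * X j l) -> forall l, Z i l = s * Z j l.
  move=> i j s H l; rewrite /Z mulr_sumr; apply: eq_bigr => k _; rewrite H; ring.
have Htr : forall i j k, Z i j != 0 -> Z j k != 0 -> Z i k != 0.
  move=> i j k h1 h2; rewrite (HC _ _ _ (HA i j h1) k) mulf_neq0 // sgr_eq0 //.
have HS : forall i j, Z i j != 0 -> [set l | Z i l != 0] = [set l | Z j l != 0].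
  move=> i j nz; apply/setP => l; rewrite !inE (HC _ _ _ (HA i j nz) l).
  by rewrite mulf_eq0 negb_or sgr_eq0 nz.
pose g i := odflt i [pick l in [set l | Z i l != 0]].
have Hg : forall i, Z i (g i) != 0.
  move=> i; rewrite /g; case: pickP => [x|H] /=; first by rewrite inE.
  by have := H i; rewrite inE (gt_eqF (Zpos i)).
have Hgeq : forall i j, (g i == g j) = (Z i j != 0).
  move=> i j; apply/eqP/idP => [e|nz]; last first.
    rewrite /g (HS i j nz); case: pickP => [x|H] //=.
    by have := H j; rewrite inE (gt_eqF (Zpos j)).
  apply: (Htr _ (g i) _ (Hg i)); rewrite Zsym e; exact: Hg.
pose sgm i := Num.sg (Z (g i) i).
have Hrow : forall i l, X i l = sgm i * X (g i) l.
  by move=> i l; rewrite /sgm Zsym; apply: HA; exact: Hg.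
exists n, g, sgm, (fun k => X k k).
split.
  move=> i; apply: sg_pm; rewrite Zsym; exact: Hg.
split.
  by move=> k; have := Zpos k; rewrite HZ pmulr_rgt0.
move=> i j; case: ifP => e; last first.
  have : Z i j = 0 by apply/eqP; move: e; rewrite Hgeq => /negbFE.
  rewrite HZ => /eqP; rewrite mulf_eq0 gt_eqF //= => /eqP //.
rewrite Hrow; set k := g i.
have Hj : forall l, Z j l = sgm j * Z k l.
  by apply: HC; move=> l; rewrite Hrow -(eqP e).
have : d k * X k j = d k * (X k k * sgm j).
  by rewrite -HZ Zsym Hj HZ; ring.
have dk0 : d k != 0 by rewrite gt_eqF.
move/(mulfI dk0) => ->; ring.
Qed.

Lemma sgpm (R : realType) (a t : R) : 0 < a -> (t = 1 \/ t = -1) -> Num.sg (a * t) = t.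
Proof.
move=> a0 [->|->]; first by rewrite mulr1 gtr0_sg.
by rewrite mulrN1 sgrN gtr0_sg.
Qed.

Lemma Char_cliques (R : realType) n (X : 'M[R]_n) : Char X -> isolated_balanced_cliques X.
Proof.
case=> K [g [sg [al [Hs [Ha HX]]]]].
set P := preim_partition g [set: 'I_n].
have HP : partition P [set: 'I_n] := preim_partitionP g _.
have Heq : {in [set: 'I_n] & &, equivalence_rel (fun x y => g x == g y)}.
  by move=> x y z _ _ _; split; [rewrite eqxx | move/eqP->].
have Hpb : forall x y, (y \in pblock P x) = (g x == g y).
  by move=> x y; rewrite (pblock_equivalence_partition Heq) ?inE.
case/and3P: HP => /eqP Hcov Htriv H0.
exists P; split; first by apply/and3P; split => //; apply/eqP.
split.
  move=> i j; rewrite HX; case: (g i =P g j) => // e; case/negP.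
  rewrite eq_pblock // ?Hpb ?e // Hcov inE //.
move=> B BP.
have Hg : forall x y, x \in B -> y \in B -> g x = g y.
  move=> x y xB yB; apply/eqP; rewrite -Hpb (def_pblock Htriv BP xB) //.
have Hs2 : forall i, sg i * sg i = 1.
  by move=> i; case: (Hs i) => ->; rewrite ?mulr1 ?mulrN1 ?opprK.
have Hent : forall i j : 'I_#|B|, principal_submx X B i j =
   al (g (enum_val i)) * (sg (enum_val i) * sg (enum_val j)).
  move=> i j; rewrite /principal_submx mxE HX (Hg _ (enum_val j)) ?enum_valP // eqxx.
  by rewrite mulrA.
have Hsgm : forall i j, sg i * sg j = 1 \/ sg i * sg j = -1.
  move=> i j; case: (Hs i) => ->; case: (Hs j) => ->; rewrite ?mulr1 ?mulrN1 ?mulN1r ?opprK;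
   by [left | right].
split.
  move=> i j; rewrite Hent; apply: mulf_neq0; first by rewrite gt_eqF ?Ha.
  by case: (Hsgm (enum_val i) (enum_val j)) => ->; rewrite ?oppr_eq0 oner_eq0.
split.
  by move=> i; rewrite Hent Hs2 mulr1 Ha.
move=> i j k; rewrite !Hent !sgpm ?Ha //.
set a := sg (enum_val i); set b := sg (enum_val j); set c := sg (enum_val k).
have -> : a * b * (b * c) * (c * a) = (a * a) * (b * b) * (c * c) by ring.
by rewrite !Hs2 !mulr1.
Qed.

Unset Implicit Arguments.

Theorem theorem3p4 (R : realType) (n : nat) :
  (forall X : 'M[R]_n, (in_S_nzrow X /\ f_HbM X = X) <-> Q_HbM X) /\
  (forall X : 'M[R]_n, Q_HbM X -> isolated_balanced_cliques X).
Proof.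
split.
  move=> X; split.
    by case=> Hnz Hf; exact: (Char_Q Hnz (fix_Char Hnz Hf)).
  move=> HQ; split; first exact: (proj1 HQ).
  exact: (proj2 (Char_fix (Q_Char HQ))).
by move=> X HQ; exact: (Char_cliques (Q_Char HQ)).
Qed.
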